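(* Let $p\in[1,\infty]$, $\alpha\in[0,1]$ irrational with rational approximants $\alpha_m$, $\theta\in[0,1)$, $\lambda\in\mathbb{R}$ and $E\in\mathbb{R}$. Set $A_m:=H_{\lambda,\alpha_m,0}-E$ and $A:=H_{\lambda,\alpha,\theta}-E$. Then $\nu(A)=\lim_{m\to\infty}\nu(A_m)$.
   Context: $(H_{\lambda,\beta,\theta}x)_n=x_{n+1}+x_{n-1}+\lambda v_{\beta,\theta}(n)x_n$ on $\ell^p(\mathbb{Z})$ with $v_{\beta,\theta}(n)=\chi_{[1-\beta,1)}(n\beta+\theta\bmod 1)$, for any $\beta\in[0,1]$ (rational or irrational). Rational approximants: for $\alpha=[a_1,a_2,\dots]$, $p_{-1}=1,p_0=0,p_n=a_np_{n-1}+p_{n-2}$, $q_{-1}=0,q_0=1,q_n=a_nq_{n-1}+q_{n-2}$, $\alpha_m=p_m/q_m$. Lower norm: $\nu(A)=\inf\{\|Ax\|:\|x\|=1\}$. *)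

(* Defs.v *)
From Stdlib Require Import Reals ZArith.
From Coquelicot Require Import Coquelicot.
Open Scope R_scope.

(** Real power with the convention pw 0 a = 0 (Rpower 0 a would be 1). *)
Definition pw (s a : R) : R := if Rle_dec s 0 then 0 else Rpower s a.

Definition lp_partial (r : R) (x : Z -> C) (N : nat) : R :=
  sum_f_R0 (fun k => pw (Cmod (x (Z.of_nat k - Z.of_nat N)%Z)) r) (2 * N).

Definition lp_norm (p : Rbar) (x : Z -> C) : Rbar :=
  match p with
  | Finite r =>
      match Lub_Rbar (fun s => exists N : nat, s = lp_partial r x N) with
      | Finite s => Finite (pw s (/ r))
      | t => t
      end
  | _ => Lub_Rbar (fun s => exists n : Z, s = Cmod (x n))
  end.

Definition lower_norm (p : Rbar) (A : (Z -> C) -> (Z -> C)) : Rbar :=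
  Glb_Rbar (fun t => exists x : Z -> C,
              lp_norm p x = Finite 1 /\ lp_norm p (A x) = Finite t).

Definition sturm_pot (beta theta : R) (n : Z) : R :=
  let y := frac_part (IZR n * beta + theta) in
  if Rle_dec (1 - beta) y then (if Rlt_dec y 1 then 1 else 0) else 0.

Definition H_op (lambda beta theta : R) (x : Z -> C) : Z -> C :=
  fun n => Cplus (Cplus (x (n + 1)%Z) (x (n - 1)%Z))
                 (Cmult (RtoC (lambda * sturm_pot beta theta n)) (x n)).

Definition H_minus_E (lambda beta theta E : R) (x : Z -> C) : Z -> C :=
  fun n => Cminus (H_op lambda beta theta x n) (Cmult (RtoC E) (x n)).

(** Continued fraction expansion alpha = [a_1, a_2, ...] via the Gauss map:
    t_0 = alpha, t_n = frac(1/t_{n-1}), a_{n} = floor(1/t_{n-1}). *)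
Definition gauss (t : R) : R := frac_part (/ t).
Definition cf_digit (alpha : R) (n : nat) : R :=
  (* a_{n+1} *) IZR (Int_part (/ (Nat.iter n gauss alpha))).

(** cf_pq alpha n = ((p_{n-1}, q_{n-1}), (p_n, q_n)). *)
Fixpoint cf_pq (alpha : R) (n : nat) : (R * R) * (R * R) :=
  match n with
  | O => ((1, 0), (0, 1))
  | S m =>
      let '((pm1, qm1), (pm, qm)) := cf_pq alpha m in
      let a := cf_digit alpha m in
      ((pm, qm), (a * pm + pm1, a * qm + qm1))
  end.

Definition cf_approx (alpha : R) (m : nat) : R :=
  let '(_, (pm, qm)) := cf_pq alpha m in pm / qm.

Definition irrational (x : R) : Prop :=
  ~ exists a b : Z, b <> 0%Z /\ x = IZR a / IZR b.

(* Main.v *)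
Require Import Defs.
From Stdlib Require Import Reals ZArith Lra Lia List Classical FunctionalExtensionality.
From Coquelicot Require Import Coquelicot.
Open Scope R_scope.

Fixpoint zr (a : Z) (n : nat) : list Z :=
  match n with O => nil | S n' => a :: zr (a + 1)%Z n' end.

Definition lsum (l : list Z) (f : Z -> R) : R :=
  fold_right (fun n acc => f n + acc) 0 l.
Arguments lsum : simpl never.

Lemma lsum_nil f : lsum nil f = 0. Proof. reflexivity. Qed.
Lemma lsum_cons a l f : lsum (a :: l) f = f a + lsum l f. Proof. reflexivity. Qed.

Lemma lsum_app l1 l2 f : lsum (l1 ++ l2) f = lsum l1 f + lsum l2 f.
Proof. induction l1; unfold lsum in *; simpl; [lra|]. rewrite IHl1; lra. Qed.

Lemma zr_app a n m : zr a (n + m) = zr a n ++ zr (a + Z.of_nat n) m.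
Proof.
  revert a; induction n; intros a; simpl.
  - f_equal; lia.
  - rewrite IHn. f_equal. f_equal. f_equal. lia.
Qed.

Lemma in_zr a n x : In x (zr a n) <-> (a <= x < a + Z.of_nat n)%Z.
Proof.
  revert a; induction n; intros a; simpl.
  - lia.
  - rewrite IHn. lia.
Qed.

Lemma lsum_ext l f g : (forall n, In n l -> f n = g n) -> lsum l f = lsum l g.
Proof.
  induction l; intros H; simpl; auto.
  unfold lsum in *; simpl. rewrite H by (left; auto). rewrite IHl; auto.
  intros; apply H; right; auto.
Qed.

Lemma lsum_le l f g : (forall n, In n l -> f n <= g n) -> lsum l f <= lsum l g.
Proof.
  induction l; intros H; simpl. unfold lsum; simpl; lra.
  unfold lsum in *; simpl. pose proof (H a (or_introl eq_refl)).
  assert (fold_right (fun n acc => f n + acc) 0 l <= fold_right (fun n acc => g n + acc) 0 l)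
   by (apply IHl; intros; apply H; right; auto). lra.
Qed.

Lemma lsum_nonneg l f : (forall n, In n l -> 0 <= f n) -> 0 <= lsum l f.
Proof.
  intros H. replace 0 with (lsum l (fun _ => 0)).
  apply lsum_le; auto. induction l; simpl; auto. unfold lsum in *; simpl. rewrite IHl; [lra|].
  intros; apply H; right; auto.
Qed.

Lemma lsum_zero l f : (forall n, In n l -> f n = 0) -> lsum l f = 0.
Proof.
  intros H. transitivity (lsum l (fun _ => 0)). apply lsum_ext; auto.
  induction l; simpl; auto. unfold lsum in *; simpl. rewrite IHl; [lra|]. intros; apply H; right; auto.
Qed.

Lemma lsum_plus l f g : lsum l (fun n => f n + g n) = lsum l f + lsum l g.
Proof. induction l; unfold lsum in *; simpl; [lra|]. rewrite IHl. lra. Qed.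

Lemma lsum_scal l c f : lsum l (fun n => c * f n) = c * lsum l f.
Proof. induction l; unfold lsum in *; simpl; [lra|]. rewrite IHl. lra. Qed.

Lemma lsum_const_zr a n c : lsum (zr a n) (fun _ => c) = INR n * c.
Proof.
  revert a; induction n; intros a; simpl. unfold lsum; simpl; lra.
  rewrite lsum_cons, IHn. destruct n; simpl INR; lra.
Qed.

Lemma lsum_comm l1 l2 (f : Z -> Z -> R) :
  lsum l1 (fun j => lsum l2 (fun i => f j i)) = lsum l2 (fun i => lsum l1 (fun j => f j i)).
Proof.
  induction l1 as [|a l1 IHl1].
  - rewrite lsum_nil, lsum_zero; auto.
  - rewrite lsum_cons, IHl1. rewrite <- lsum_plus. apply lsum_ext. intros; rewrite lsum_cons; auto.
Qed.

Lemma lsum_shift a n s f : lsum (zr a n) (fun m => f (m + s)%Z) = lsum (zr (a + s) n) f.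
Proof.
  revert a; induction n; intros a; simpl; auto.
  rewrite !lsum_cons, IHn. replace (a + 1 + s)%Z with (a + s + 1)%Z by lia. reflexivity.
Qed.

Lemma zr_split3 b m a k : (b <= a)%Z -> (a + Z.of_nat k <= b + Z.of_nat m)%Z ->
  zr b m = zr b (Z.to_nat (a - b)) ++ zr a k ++ zr (a + Z.of_nat k) (m - Z.to_nat (a - b) - k).
Proof.
  intros H1 H2.
  replace m with (Z.to_nat (a - b) + (k + (m - Z.to_nat (a - b) - k)))%nat at 1 by lia.
  rewrite zr_app, zr_app. f_equal. f_equal. f_equal; lia. f_equal. lia.
Qed.

Lemma lsum_sub F a k b m : (forall n, 0 <= F n) -> (b <= a)%Z ->
  (a + Z.of_nat k <= b + Z.of_nat m)%Z -> lsum (zr a k) F <= lsum (zr b m) F.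
Proof.
  intros HF H1 H2. rewrite (zr_split3 b m a k H1 H2), !lsum_app.
  assert (0 <= lsum (zr b (Z.to_nat (a - b))) F) by (apply lsum_nonneg; auto).
  assert (0 <= lsum (zr (a + Z.of_nat k) (m - Z.to_nat (a - b) - k)) F) by (apply lsum_nonneg; auto).
  lra.
Qed.

Lemma lsum_supp F a k b m : (forall n, ~ (a <= n < a + Z.of_nat k)%Z -> F n = 0) -> (b <= a)%Z ->
  (a + Z.of_nat k <= b + Z.of_nat m)%Z -> lsum (zr b m) F = lsum (zr a k) F.
Proof.
  intros HF H1 H2. rewrite (zr_split3 b m a k H1 H2), !lsum_app.
  rewrite (lsum_zero (zr b _)), (lsum_zero (zr (a + _) _)). lra.
  - intros n Hn%in_zr. apply HF. lia.
  - intros n Hn%in_zr. apply HF. lia.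
Qed.

Lemma lsum_le_supp F a k b m : (forall n, 0 <= F n) -> (forall n, ~ (a <= n < a + Z.of_nat k)%Z -> F n = 0) ->
  lsum (zr b m) F <= lsum (zr a k) F.
Proof.
  intros H0 HF.
  set (c := Z.min a b). set (M := Z.to_nat (Z.max (a + Z.of_nat k) (b + Z.of_nat m) - c)).
  rewrite <- (lsum_supp F a k c M HF) by lia.
  apply lsum_sub; auto; lia.
Qed.

Lemma sum_f_R0_lsum g a n :
  sum_f_R0 (fun k => g (a + Z.of_nat k)%Z) n = lsum (zr a (S n)) g.
Proof.
  induction n.
  - simpl. rewrite lsum_cons, lsum_nil. replace (a + 0)%Z with a by lia. lra.
  - cbn [sum_f_R0]. rewrite IHn. replace (S (S n)) with (S n + 1)%nat by lia. rewrite zr_app, lsum_app.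
    f_equal. unfold lsum; simpl; lra.
Qed.

Lemma lp_partial_lsum r x N :
  lp_partial r x N = lsum (zr (- Z.of_nat N) (2 * N + 1)) (fun n => pw (Cmod (x n)) r).
Proof.
  unfold lp_partial. replace (2 * N + 1)%nat with (S (2 * N)) by lia.
  rewrite <- sum_f_R0_lsum. apply sum_eq. intros i _. f_equal. f_equal. f_equal. lia.
Qed.

Lemma pw_nonneg s a : 0 <= pw s a.
Proof. unfold pw. destruct (Rle_dec s 0). lra. unfold Rpower. left; apply exp_pos. Qed.

Lemma pw_pos s a : 0 < s -> pw s a = Rpower s a.
Proof. intros H. unfold pw. destruct (Rle_dec s 0); [lra|auto]. Qed.

Lemma pw_zero a : pw 0 a = 0.
Proof. unfold pw. destruct (Rle_dec 0 0); lra. Qed.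

Lemma pw_pos_lt s a : 0 < s -> 0 < pw s a.
Proof. intros H. rewrite pw_pos by auto. unfold Rpower; apply exp_pos. Qed.

Lemma pw_inv r s : 0 < r -> 0 <= s -> pw (pw s r) (/ r) = s.
Proof.
  intros Hr Hs. destruct (Req_dec s 0) as [->|]. rewrite !pw_zero; auto.
  assert (0 < s) by lra. rewrite (pw_pos s) by auto. rewrite pw_pos by (unfold Rpower; apply exp_pos).
  rewrite Rpower_mult. rewrite Rinv_r by lra. apply Rpower_1; auto.
Qed.

Lemma pw_inv' r s : 0 < r -> 0 <= s -> pw (pw s (/ r)) r = s.
Proof.
  intros Hr Hs. rewrite <- (Rinv_inv r) at 2. apply pw_inv; auto. apply Rinv_0_lt_compat; auto.
Qed.

Lemma pw_mono s1 s2 a : 0 <= a -> 0 <= s1 <= s2 -> pw s1 a <= pw s2 a.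
Proof.
  intros Ha Hs. destruct (Req_dec s1 0) as [->|]. rewrite pw_zero; apply pw_nonneg.
  rewrite !pw_pos by lra. apply Rle_Rpower_l; lra.
Qed.

Lemma pw_mono_lt s1 s2 a : 0 < a -> 0 <= s1 < s2 -> pw s1 a < pw s2 a.
Proof.
  intros Ha Hs. destruct (Req_dec s1 0) as [->|]. rewrite pw_zero; apply pw_pos_lt; lra.
  rewrite !pw_pos by lra. apply Rlt_Rpower_l; lra.
Qed.

Lemma pw_mult s1 s2 a : 0 <= s1 -> 0 <= s2 -> pw (s1 * s2) a = pw s1 a * pw s2 a.
Proof.
  intros H1 H2. destruct (Req_dec s1 0) as [->|]. rewrite Rmult_0_l, !pw_zero; lra.
  destruct (Req_dec s2 0) as [->|]. rewrite Rmult_0_r, !pw_zero; lra.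
  rewrite !pw_pos by (try apply Rmult_lt_0_compat; lra). rewrite Rpower_mult_distr; auto; lra.
Qed.

Lemma pw_one a : pw 1 a = 1.
Proof. rewrite pw_pos by lra. unfold Rpower. rewrite ln_1, Rmult_0_r, exp_0. auto. Qed.

Lemma pw_Rinv s a : 0 < s -> pw (/ s) a = / pw s a.
Proof.
  intros H. rewrite !pw_pos by (try apply Rinv_0_lt_compat; lra).
  unfold Rpower. rewrite ln_Rinv by auto. rewrite <- exp_Ropp. f_equal; ring.
Qed.

Lemma pw_1 s : 0 <= s -> pw s 1 = s.
Proof. intros H. destruct (Req_dec s 0) as [->|]. apply pw_zero. rewrite pw_pos by lra. apply Rpower_1; lra. Qed.

Lemma pw_superadd u v r : 1 <= r -> 0 <= u -> 0 <= v -> pw u r + pw v r <= pw (u + v) r.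
Proof.
  intros Hr Hu Hv. destruct (Req_dec u 0) as [->|]. rewrite pw_zero, !Rplus_0_l; lra.
  destruct (Req_dec v 0) as [->|]. rewrite pw_zero, !Rplus_0_r; lra.
  assert (HW : forall w, 0 < w -> pw w r = w * pw w (r - 1)).
  { intros w Hw. rewrite !pw_pos by auto. rewrite <- (Rpower_1 w) at 2 by auto.
    rewrite <- Rpower_plus. f_equal. ring. }
  rewrite !HW by lra. rewrite Rmult_plus_distr_r.
  apply Rplus_le_compat; apply Rmult_le_compat_l; try lra; apply pw_mono; lra.
Qed.

Lemma pw_sum3 a b c r : 0 <= r -> 0 <= a -> 0 <= b -> 0 <= c ->
  pw (a + b + c) r <= pw 3 r * (pw a r + pw b r + pw c r).
Proof.
  intros Hr Ha Hb Hc.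
  set (m := Rmax a (Rmax b c)).
  assert (a <= m) by apply Rmax_l.
  assert (b <= m) by (eapply Rle_trans; [apply Rmax_l|apply Rmax_r]).
  assert (c <= m) by (eapply Rle_trans; [apply Rmax_r|apply Rmax_r]).
  apply Rle_trans with (pw (3 * m) r). apply pw_mono; [lra|split]; lra.
  rewrite pw_mult by lra. apply Rmult_le_compat_l. apply pw_nonneg.
  unfold m. pose proof (pw_nonneg a r); pose proof (pw_nonneg b r); pose proof (pw_nonneg c r).
  repeat (apply Rmax_case_strong; intros); lra.
Qed.

Definition supp (x : Z -> C) (a : Z) (k : nat) :=
  forall n, ~ (a <= n < a + Z.of_nat k)%Z -> x n = RtoC 0.

Lemma Cmod_0' : Cmod (RtoC 0) = 0.
Proof. rewrite Cmod_R. apply Rabs_R0. Qed.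

Definition Fp (r : R) (x : Z -> C) (n : Z) := pw (Cmod (x n)) r.

Lemma Fp_nonneg r x n : 0 <= Fp r x n.
Proof. apply pw_nonneg. Qed.

Lemma Fp_supp r x a k : supp x a k -> forall n, ~ (a <= n < a + Z.of_nat k)%Z -> Fp r x n = 0.
Proof. intros H n Hn. unfold Fp. rewrite H by auto. rewrite Cmod_0'. apply pw_zero. Qed.

Lemma lp_fin r x a k : 0 < r -> supp x a k ->
  lp_norm (Finite r) x = Finite (pw (lsum (zr a k) (Fp r x)) (/ r)).
Proof.
  intros Hr Hs. unfold lp_norm.
  assert (Lub_Rbar (fun s => exists N : nat, s = lp_partial r x N) = Finite (lsum (zr a k) (Fp r x))) as ->.
  { apply is_lub_Rbar_unique. split.
    - intros s [N ->]. rewrite lp_partial_lsum. simpl.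
      apply lsum_le_supp. apply Fp_nonneg. apply Fp_supp; auto.
    - intros b Hb. set (N := (Z.to_nat (Z.abs a) + k)%nat).
      assert (E : lp_partial r x N = lsum (zr a k) (Fp r x)).
      { rewrite lp_partial_lsum. apply (lsum_supp (Fp r x) a k). apply Fp_supp; auto. lia. lia. }
      rewrite <- E. apply Hb. exists N; auto. }
  reflexivity.
Qed.

Lemma lp_fin_char r x t : 0 < r -> lp_norm (Finite r) x = Finite t ->
  0 <= t /\ (forall a k, lsum (zr a k) (Fp r x) <= pw t r) /\
  (forall d, 0 < d -> exists N : nat, pw t r - d < lsum (zr (- Z.of_nat N) (2 * N + 1)) (Fp r x)).
Proof.
  intros Hr. unfold lp_norm.
  pose proof (Lub_Rbar_correct (fun s => exists N : nat, s = lp_partial r x N)) as [Hub Hlub].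
  destruct (Lub_Rbar (fun s => exists N : nat, s = lp_partial r x N)) as [s| |] eqn:Hs; try discriminate.
  intros Ht. injection Ht as <-.
  assert (Hs0 : 0 <= s).
  { specialize (Hub (lp_partial r x 0) (ex_intro _ 0%nat eq_refl)). simpl in Hub.
    eapply Rle_trans; [|apply Hub]. rewrite lp_partial_lsum. apply lsum_nonneg. intros; apply pw_nonneg. }
  rewrite pw_inv' by auto. split; [apply pw_nonneg|split].
  - intros a k. set (N := (Z.to_nat (Z.abs a) + k)%nat).
    apply Rle_trans with (lp_partial r x N).
    + rewrite lp_partial_lsum. apply lsum_sub. apply Fp_nonneg. lia. lia.
    + specialize (Hub _ (ex_intro _ N eq_refl)). simpl in Hub. auto.
  - intros d Hd. apply NNPP. intros Hn.
    assert (Rbar_le s (s - d)). { apply Hlub. intros y [N ->]. simpl.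
      destruct (Rle_dec (lp_partial r x N) (s - d)); auto. exfalso; apply Hn. exists N.
      pose proof (lp_partial_lsum r x N). unfold Fp. lra. }
    simpl in H. lra.
Qed.

Lemma lp_inf_char x t : lp_norm p_infty x = Finite t ->
  (forall n, Cmod (x n) <= t) /\ (forall d, 0 < d -> exists n, t - d < Cmod (x n)).
Proof.
  unfold lp_norm. intros Ht.
  pose proof (Lub_Rbar_correct (fun s => exists n : Z, s = Cmod (x n))) as [Hub Hlub].
  rewrite Ht in Hub, Hlub. split.
  - intros n. specialize (Hub _ (ex_intro _ n eq_refl)). exact Hub.
  - intros d Hd. apply NNPP. intros Hn.
    assert (Rbar_le t (t - d)). { apply Hlub. intros y [n ->]. simpl.
      destruct (Rle_dec (Cmod (x n)) (t - d)); auto. exfalso; apply Hn. exists n. lra. }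
    simpl in H. lra.
Qed.

Lemma lp_inf_intro x t : (forall n, Cmod (x n) <= t) -> (forall d, 0 < d -> exists n, t - d < Cmod (x n)) ->
  lp_norm p_infty x = Finite t.
Proof.
  intros H1 H2. unfold lp_norm. apply is_lub_Rbar_unique. split.
  - intros y [n ->]. simpl. auto.
  - intros b Hb. destruct b as [b| |]; simpl; auto.
    + apply Rnot_lt_le. intros Hlt. destruct (H2 (t - b)) as [n Hn]. lra.
      specialize (Hb _ (ex_intro _ n eq_refl)). simpl in Hb. lra.
    + specialize (Hb _ (ex_intro _ 0%Z eq_refl)). simpl in Hb. auto.
Qed.

Lemma lp_inf_bound x M : (forall n, Cmod (x n) <= M) -> exists t, lp_norm p_infty x = Finite t.
Proof.
  intros H. unfold lp_norm.
  pose proof (Lub_Rbar_correct (fun s => exists n : Z, s = Cmod (x n))) as [Hub Hlub].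
  destruct (Lub_Rbar (fun s => exists n : Z, s = Cmod (x n))) as [s| |] eqn:E.
  - eauto.
  - exfalso. assert (Rbar_le p_infty M). apply Hlub. intros y [n ->]. simpl. auto. simpl in H0. auto.
  - exfalso. specialize (Hub _ (ex_intro _ 0%Z eq_refl)). simpl in Hub. auto.
Qed.

Lemma lp_norm_nonneg p x t : lp_norm p x = Finite t -> 0 <= t.
Proof.
  destruct p as [r| |].
  - unfold lp_norm. destruct (Lub_Rbar _); try discriminate. intros H; injection H as <-. apply pw_nonneg.
  - intros H. destruct (lp_inf_char x t H) as [H1 _]. specialize (H1 0%Z).
    pose proof (Cmod_ge_0 (x 0%Z)). lra.
  - intros H. change (lp_norm m_infty x) with (lp_norm p_infty x) in H.
    destruct (lp_inf_char x t H) as [H1 _]. specialize (H1 0%Z).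
    pose proof (Cmod_ge_0 (x 0%Z)). lra.
Qed.

Lemma lp_ext p x y : (forall n, x n = y n) -> lp_norm p x = lp_norm p y.
Proof. intros H. apply functional_extensionality in H. subst; auto. Qed.

Lemma supp_shift x a k s : supp x a k -> supp (fun n => x (n + s)%Z) (a - s) k.
Proof. intros H n Hn. apply H. lia. Qed.

Lemma lp_shift p x a k s : Rbar_le (Finite 1) p -> supp x a k ->
  lp_norm p (fun n => x (n + s)%Z) = lp_norm p x.
Proof.
  intros Hp Hs. destruct p as [r| |]; simpl in Hp; try contradiction.
  - rewrite (lp_fin r _ (a - s) k) by (try lra; apply supp_shift; auto).
    rewrite (lp_fin r x a k) by (try lra; auto). do 2 f_equal.
    unfold Fp. rewrite (lsum_shift (a - s) k s (fun n => pw (Cmod (x n)) r)).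
    f_equal. f_equal. lia.
  - unfold lp_norm. apply Lub_Rbar_eqset. intros v; split.
    + intros [n ->]. eauto.
    + intros [n ->]. exists (n - s)%Z. do 2 f_equal. lia.
Qed.

Lemma lp_scal_fin r x a k c : 0 < r -> 0 < c -> supp x a k ->
  lp_norm (Finite r) (fun n => Cmult (RtoC c) (x n)) = Finite (c * pw (lsum (zr a k) (Fp r x)) (/ r)).
Proof.
  intros Hr Hc Hs. rewrite (lp_fin r _ a k) by (auto; intros n Hn; rewrite Hs by auto;
     unfold Cmult, RtoC; simpl; f_equal; ring).
  f_equal. unfold Fp. rewrite (lsum_ext _ _ (fun n => pw c r * pw (Cmod (x n)) r)).
  - rewrite lsum_scal. rewrite pw_mult. rewrite pw_inv by lra. auto. apply pw_nonneg.
    apply lsum_nonneg; intros; apply pw_nonneg.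
  - intros n _. rewrite Cmod_mult, Cmod_R, Rabs_pos_eq by lra. apply pw_mult. lra. apply Cmod_ge_0.
Qed.

Lemma lp_scal_inf x c t : 0 < c -> lp_norm p_infty x = Finite t ->
  lp_norm p_infty (fun n => Cmult (RtoC c) (x n)) = Finite (c * t).
Proof.
  intros Hc H. destruct (lp_inf_char x t H) as [H1 H2]. apply lp_inf_intro.
  - intros n. rewrite Cmod_mult, Cmod_R, Rabs_pos_eq by lra. apply Rmult_le_compat_l; auto; lra.
  - intros d Hd. destruct (H2 (d / c)) as [n Hn]. apply Rdiv_lt_0_compat; auto.
    exists n. rewrite Cmod_mult, Cmod_R, Rabs_pos_eq by lra.
    replace (c * t - d) with (c * (t - d / c)) by (field; lra). apply Rmult_lt_compat_l; auto.
Qed.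

Definition Bop (lambda E : R) (V : Z -> R) (x : Z -> C) : Z -> C :=
  fun n => Cminus (Cplus (Cplus (x (n + 1)%Z) (x (n - 1)%Z))
                 (Cmult (RtoC (lambda * V n)) (x n))) (Cmult (RtoC E) (x n)).

Lemma H_minus_E_Bop lambda beta theta E : H_minus_E lambda beta theta E = Bop lambda E (sturm_pot beta theta).
Proof. reflexivity. Qed.

Lemma Bop_cut lambda E V x (phi : Z -> R) n :
  Bop lambda E V (fun m => Cmult (RtoC (phi m)) (x m)) n =
  Cplus (Cplus (Cmult (RtoC (phi n)) (Bop lambda E V x n))
               (Cmult (RtoC (phi (n + 1)%Z - phi n)) (x (n + 1)%Z)))
        (Cmult (RtoC (phi (n - 1)%Z - phi n)) (x (n - 1)%Z)).
Proof.
  unfold Bop. destruct (x (n + 1)%Z), (x (n - 1)%Z), (x n).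
  unfold Cminus, Cplus, Cmult, Copp, RtoC; simpl. f_equal; ring.
Qed.

Lemma Bop_scal lambda E V x c n :
  Bop lambda E V (fun m => Cmult (RtoC c) (x m)) n = Cmult (RtoC c) (Bop lambda E V x n).
Proof.
  unfold Bop. destruct (x (n + 1)%Z), (x (n - 1)%Z), (x n).
  unfold Cminus, Cplus, Cmult, Copp, RtoC; simpl. f_equal; ring.
Qed.

Lemma Bop_cut_bound lambda E V x (phi : Z -> R) n :
  Cmod (Bop lambda E V (fun m => Cmult (RtoC (phi m)) (x m)) n) <=
  Rabs (phi n) * Cmod (Bop lambda E V x n) + Rabs (phi (n + 1)%Z - phi n) * Cmod (x (n + 1)%Z)
  + Rabs (phi (n - 1)%Z - phi n) * Cmod (x (n - 1)%Z).
Proof.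
  rewrite Bop_cut. eapply Rle_trans. apply Cmod_triangle. apply Rplus_le_compat.
  eapply Rle_trans. apply Cmod_triangle. rewrite !Cmod_mult, !Cmod_R. lra.
  rewrite !Cmod_mult, !Cmod_R. lra.
Qed.

Lemma Bop_shift lambda E V W y s n :
  (forall m, y (m + s)%Z = RtoC 0 \/ W m = V (m + s)%Z) ->
  Bop lambda E W (fun m => y (m + s)%Z) n = Bop lambda E V y (n + s)%Z.
Proof.
  intros H. unfold Bop. replace (n + 1 + s)%Z with (n + s + 1)%Z by lia.
  replace (n - 1 + s)%Z with (n + s - 1)%Z by lia.
  destruct (H n) as [H0|H0]; rewrite H0; auto.
  unfold Cminus, Cplus, Cmult, Copp, RtoC; simpl. f_equal; ring.
Qed.

Lemma supp_Bop lambda E V x a k : supp x a k -> supp (Bop lambda E V x) (a - 1) (k + 2).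
Proof.
  intros H n Hn. unfold Bop. rewrite !H by lia. unfold Cminus, Cplus, Cmult, Copp, RtoC; simpl. f_equal; ring.
Qed.

Lemma Cmod_le_lsum x a k n : (a <= n < a + Z.of_nat k)%Z -> Cmod (x n) <= lsum (zr a k) (fun m => Cmod (x m)).
Proof.
  revert a; induction k; intros a Hn. simpl in Hn; lia.
  simpl. rewrite lsum_cons. destruct (Z.eq_dec n a) as [->|].
  - pose proof (lsum_nonneg (zr (a + 1) k) (fun m => Cmod (x m)) (fun m _ => Cmod_ge_0 _)). lra.
  - pose proof (IHk (a + 1)%Z ltac:(lia)). pose proof (Cmod_ge_0 (x a)). lra.
Qed.

Lemma supp_bounded x a k : supp x a k -> forall n, Cmod (x n) <= lsum (zr a k) (fun m => Cmod (x m)).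
Proof.
  intros H n. destruct (Z_lt_le_dec n a).
  - rewrite H by lia. rewrite Cmod_0'. apply lsum_nonneg; intros; apply Cmod_ge_0.
  - destruct (Z_lt_le_dec n (a + Z.of_nat k)).
    + apply Cmod_le_lsum; lia.
    + rewrite H by lia. rewrite Cmod_0'. apply lsum_nonneg; intros; apply Cmod_ge_0.
Qed.

Lemma lp_supp_finite p x a k : Rbar_le (Finite 1) p -> supp x a k -> exists t, lp_norm p x = Finite t.
Proof.
  intros Hp Hs. destruct p as [r| |]; simpl in Hp; try contradiction.
  - rewrite (lp_fin r x a k) by (auto; lra). eauto.
  - eapply lp_inf_bound. apply supp_bounded; eauto.
Qed.

Lemma nat_gt (X : R) : exists N : nat, X < INR N.
Proof.
  destruct (archimed X) as [H1 _]. exists (Z.to_nat (up X)).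
  destruct (Z_lt_le_dec (up X) 0).
  - replace (Z.to_nat (up X)) with 0%nat by lia. simpl. apply Rlt_trans with (IZR (up X)); auto.
    apply IZR_lt in l. simpl in l. lra.
  - rewrite INR_IZR_INZ, Z2Nat.id by lia. auto.
Qed.

Lemma lsum_strict l f g : (forall j, In j l -> f j <= g j) -> (exists j, In j l /\ f j < g j) -> lsum l f < lsum l g.
Proof.
  induction l as [|a l IH]; intros H1 [j [Hj Hlt]]. destruct Hj.
  rewrite !lsum_cons. destruct Hj as [<-|Hj].
  - pose proof (lsum_le l f g (fun n Hn => H1 n (or_intror Hn))). lra.
  - pose proof (H1 a (or_introl eq_refl)).
    assert (lsum l f < lsum l g). apply IH. intros; apply H1; right; auto. exists j; auto. lra.
Qed.

Lemma pigeon l A B K : (forall j, In j l -> 0 <= A j) -> (forall j, In j l -> 0 <= B j) ->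
  lsum l A <= K * lsum l B -> 0 < lsum l B -> 0 <= K ->
  exists j, In j l /\ 0 < B j /\ A j <= K * B j.
Proof.
  intros HA HB Hs Hpos HK. apply NNPP. intros Hn.
  assert (Hall : forall j, In j l -> K * B j <= A j /\ (0 < B j -> K * B j < A j)).
  { intros j Hj. split.
    - destruct (Req_dec (B j) 0) as [E|E]. rewrite E, Rmult_0_r; auto.
      apply Rnot_lt_le. intros Hlt. apply Hn. exists j. split; auto.
      destruct (Rle_lt_or_eq_dec 0 (B j) (HB j Hj)) as [Hb|Hb]; [split; lra|]. exfalso; apply E; auto.
    - intros Hb. apply Rnot_le_lt. intros Hle. apply Hn. exists j; auto. }
  assert (exists j, In j l /\ 0 < B j).
  { apply NNPP. intros Hn2. assert (lsum l B <= lsum l (fun _ => 0)).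
    apply lsum_le. intros j Hj. apply Rnot_lt_le. intros Hb. apply Hn2. eauto.
    rewrite (lsum_zero l (fun _ => 0)) in H; auto. lra. }
  destruct H as [j [Hj Hb]].
  assert (lsum l (fun j => K * B j) < lsum l A).
  { apply lsum_strict. intros; apply Hall; auto. exists j. split; auto. apply Hall; auto. }
  rewrite lsum_scal in H. lra.
Qed.

Definition chi (j : Z) (L : nat) (n : Z) : R :=
  if Z_lt_le_dec n j then 0 else if Z_lt_le_dec n (j + Z.of_nat L) then 1 else 0.

Lemma chi_in j L n : (j <= n < j + Z.of_nat L)%Z -> chi j L n = 1.
Proof. intros H. unfold chi. destruct (Z_lt_le_dec n j); [lia|]. destruct (Z_lt_le_dec n (j + Z.of_nat L)); lia || auto. Qed.

Lemma chi_out j L n : ~ (j <= n < j + Z.of_nat L)%Z -> chi j L n = 0.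
Proof. intros H. unfold chi. destruct (Z_lt_le_dec n j); auto. destruct (Z_lt_le_dec n (j + Z.of_nat L)); auto; lia. Qed.

Lemma chi_01 j L n : chi j L n = 0 \/ chi j L n = 1.
Proof. unfold chi. destruct (Z_lt_le_dec n j); auto. destruct (Z_lt_le_dec n (j + Z.of_nat L)); auto. Qed.

Lemma Rabs_chi_diff j L n m : Rabs (chi j L n - chi j L m) <= 1.
Proof. destruct (chi_01 j L n) as [-> | ->], (chi_01 j L m) as [-> | ->]; apply Rabs_le; lra. Qed.

Lemma Rabs_chi j L n : Rabs (chi j L n) <= 1.
Proof. destruct (chi_01 j L n) as [-> | ->]; rewrite ?Rabs_R0, ?Rabs_R1; lra. Qed.

Section Fin.
Variables (lambda E : R) (V : Z -> R) (r : R) (x : Z -> C).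
Hypothesis Hr : 1 <= r.

Definition yj (j : Z) (L : nat) : Z -> C := fun n => Cmult (RtoC (chi j L n)) (x n).

Lemma supp_yj j L : supp (yj j L) j L.
Proof. intros n Hn. unfold yj. rewrite chi_out by auto. unfold Cmult, RtoC; simpl. f_equal; ring. Qed.

Definition gB (n : Z) := pw 3 r * (Fp r (Bop lambda E V x) n + Fp r x (n + 1)%Z + Fp r x (n - 1)%Z).

Lemma Fp_yj_bound j L n : Fp r (Bop lambda E V (yj j L)) n <= gB n.
Proof.
  unfold Fp, gB. eapply Rle_trans. apply pw_mono. lra. split. apply Cmod_ge_0.
  apply (Bop_cut_bound lambda E V x (chi j L) n). eapply Rle_trans; [|apply pw_sum3].
  - apply pw_mono. lra. split.
    + pose proof (Cmod_ge_0 (Bop lambda E V x n)); pose proof (Cmod_ge_0 (x (n+1)%Z));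
      pose proof (Cmod_ge_0 (x (n-1)%Z)); pose proof (Rabs_pos (chi j L n));
      pose proof (Rabs_pos (chi j L (n+1)%Z - chi j L n)); pose proof (Rabs_pos (chi j L (n-1)%Z - chi j L n)).
      repeat apply Rplus_le_le_0_compat; apply Rmult_le_pos; auto.
    + pose proof (Cmod_ge_0 (Bop lambda E V x n)); pose proof (Cmod_ge_0 (x (n+1)%Z));
      pose proof (Cmod_ge_0 (x (n-1)%Z)).
      pose proof (Rabs_chi j L n). pose proof (Rabs_chi_diff j L (n+1)%Z n). pose proof (Rabs_chi_diff j L (n-1)%Z n).
      repeat apply Rplus_le_compat; rewrite <- (Rmult_1_l (Cmod _)) at 2; apply Rmult_le_compat_r; auto.
  - lra.
  - apply Cmod_ge_0.
  - apply Cmod_ge_0.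
  - apply Cmod_ge_0.
Qed.

Lemma Fp_yj_interior j L n : (j < n < j + Z.of_nat L - 1)%Z ->
  Fp r (Bop lambda E V (yj j L)) n <= Fp r (Bop lambda E V x) n.
Proof.
  intros H. unfold Fp. apply pw_mono. lra. split. apply Cmod_ge_0.
  eapply Rle_trans. apply (Bop_cut_bound lambda E V x (chi j L) n).
  rewrite !chi_in by lia. rewrite Rminus_diag, Rabs_R0, Rabs_R1. lra.
Qed.
End Fin.

Lemma double_shift l k a F :
  lsum l (fun j => lsum (zr (j + a) k) F) = lsum (zr 0 k) (fun i => lsum l (fun j => F (j + (a + i))%Z)).
Proof.
  rewrite <- lsum_comm. apply lsum_ext. intros j _.
  transitivity (lsum (zr (0 + (j + a)) k) F). replace (0 + (j + a))%Z with (j + a)%Z by lia; reflexivity.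
  rewrite <- (lsum_shift 0 k (j + a) F).
  apply lsum_ext. intros i _. f_equal. lia.
Qed.

Lemma range_sum_bound j0 J k a F M : (forall b m, lsum (zr b m) F <= M) ->
  lsum (zr j0 J) (fun j => lsum (zr (j + a) k) F) <= INR k * M.
Proof.
  intros H. rewrite double_shift. rewrite <- (lsum_const_zr 0 k M). apply lsum_le. intros i _.
  rewrite lsum_shift. apply H.
Qed.

Lemma loc_fin lambda E r eps T : 1 <= r -> 0 < eps -> 0 <= T ->
  exists L : nat, forall V x t, lp_norm (Finite r) x = Finite 1 ->
    lp_norm (Finite r) (Bop lambda E V x) = Finite t -> t <= T ->
    exists c y t', supp y c L /\ lp_norm (Finite r) y = Finite 1 /\
      lp_norm (Finite r) (Bop lambda E V y) = Finite t' /\ t' <= t + eps.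
Proof.
  intros Hr Heps HT.
  set (er := pw eps r). assert (Her : 0 < er) by (apply pw_pos_lt; auto).
  set (tT := pw T r). assert (HtT : 0 <= tT) by apply pw_nonneg.
  set (p3 := pw 3 r). assert (Hp3 : 0 <= p3) by apply pw_nonneg.
  set (C0 := 4 * p3 * (tT + 2)).
  destruct (nat_gt (2 * C0 / er)) as [L0 HL0].
  exists (L0 + 2)%nat. set (L := (L0 + 2)%nat).
  intros V x t Hx HBx Ht.
  destruct (lp_fin_char r x 1) as [_ [Hxr Hxa]]; [lra|auto|]. rewrite pw_one in *.
  destruct (lp_fin_char r (Bop lambda E V x) t) as [Ht0 [HBr _]]; [lra|apply HBx|].
  set (tau := pw t r). assert (Htau : tau <= tT) by (apply pw_mono; lra).
  assert (Htau0 : 0 <= tau) by apply pw_nonneg.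
  set (del := er / (2 * (tT + er))).
  assert (Hdel : del * (tT + er) = er / 2) by (unfold del; field; lra).
  assert (Hdel0 : 0 < del) by (unfold del; apply Rdiv_lt_0_compat; lra).
  assert (Hdel1 : del <= 1 / 2).
  { unfold del. apply Rmult_le_reg_r with (2 * (tT + er)). lra.
    unfold Rdiv. rewrite Rmult_assoc, Rinv_l by lra. lra. }
  destruct (Hxa del Hdel0) as [N HN].
  set (j0 := (- Z.of_nat N - Z.of_nat L)%Z). set (J := (2 * N + 1 + L)%nat). set (l := zr j0 J).
  set (Bx := Bop lambda E V x).
  set (Aj := fun j => lsum (zr (j - 1) (L + 2)) (Fp r (Bop lambda E V (yj x j L)))).
  set (Bj := fun j => lsum (zr j L) (Fp r (yj x j L))).
  assert (SB : INR L * (1 - del) <= lsum l Bj).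
  { assert (E1 : forall j, Bj j = lsum (zr (j + 0) L) (Fp r x)).
    { intros j. unfold Bj. replace (j + 0)%Z with j by lia. apply lsum_ext. intros n Hn%in_zr.
      unfold Fp, yj. rewrite chi_in by lia. f_equal. destruct (x n); unfold Cmult, RtoC, Cmod; simpl.
      f_equal. f_equal; ring. }
    rewrite (lsum_ext l _ _ (fun j _ => E1 j)). unfold l. rewrite double_shift.
    rewrite <- lsum_const_zr with (a := 0%Z). apply lsum_le. intros i Hi%in_zr.
    rewrite lsum_shift. eapply Rle_trans; [apply Rlt_le, HN|]. apply lsum_sub. apply Fp_nonneg.
    unfold j0; lia. unfold j0, J; lia. }
  assert (SA : lsum l Aj <= INR L * tau + C0).
  { assert (E2 : forall j, Aj j <= lsum (zr (j + -1) 2) (gB lambda E V r x)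
                   + (lsum (zr (j + 1) L0) (Fp r Bx) + lsum (zr (j + (1 + Z.of_nat L0)) 2) (gB lambda E V r x))).
    { intros j. unfold Aj. replace (L + 2)%nat with (2 + (L0 + 2))%nat by (unfold L; lia).
      rewrite (zr_app (j - 1) 2 (L0 + 2)), (zr_app (j - 1 + Z.of_nat 2) L0 2).
      rewrite (lsum_app (zr (j - 1) 2)), (lsum_app (zr (j - 1 + Z.of_nat 2) L0)).
      replace (j - 1 + Z.of_nat 2)%Z with (j + 1)%Z by lia.
      replace (j + 1 + Z.of_nat L0)%Z with (j + (1 + Z.of_nat L0))%Z by lia.
      replace (j - 1)%Z with (j + -1)%Z by lia.
      apply Rplus_le_compat; [|apply Rplus_le_compat].
      - apply lsum_le. intros; apply Fp_yj_bound; auto.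
      - apply lsum_le. intros n Hn%in_zr. apply Fp_yj_interior; auto. unfold L. lia.
      - apply lsum_le. intros; apply Fp_yj_bound; auto. }
    eapply Rle_trans. apply lsum_le. intros j _. apply E2.
    rewrite !lsum_plus.
    assert (HG : forall b m, lsum (zr b m) (gB lambda E V r x) <= p3 * (tau + 2)).
    { intros b m. unfold gB. rewrite lsum_scal. apply Rmult_le_compat_l; auto.
      rewrite !lsum_plus. 
      assert (lsum (zr b m) (fun n => Fp r x (n + 1)%Z) <= 1) by (rewrite lsum_shift; apply Hxr).
      assert (lsum (zr b m) (fun n => Fp r x (n - 1)%Z) <= 1).
      { rewrite (lsum_ext _ _ (fun n => Fp r x (n + -1)%Z)) by (intros; f_equal; lia).
        rewrite lsum_shift; apply Hxr. }
      pose proof (HBr b m). fold tau in H1. lra. }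
    pose proof (range_sum_bound j0 J 2 (-1) _ _ HG).
    pose proof (range_sum_bound j0 J L0 1 (Fp r Bx) tau HBr).
    pose proof (range_sum_bound j0 J 2 (1 + Z.of_nat L0) _ _ HG).
    unfold l. simpl INR in *.
    assert (INR L0 * tau <= INR L * tau). { apply Rmult_le_compat_r; auto. apply le_INR. unfold L; lia. }
    unfold C0. assert (p3 * (tau + 2) <= p3 * (tT + 2)) by (apply Rmult_le_compat_l; lra). lra. }
  assert (HL : 0 < INR L) by (apply lt_0_INR; unfold L; lia).
  assert (HL2 : 2 * C0 < INR L * er).
  { assert (INR L0 < INR L) by (apply lt_INR; unfold L; lia).
    assert (2 * C0 = (2 * C0 / er) * er) by (field; lra).
    assert ((2 * C0 / er) * er < INR L * er) by (apply Rmult_lt_compat_r; lra). lra. }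
  assert (Hpos : 0 < lsum l Bj). { eapply Rlt_le_trans; [|apply SB]. apply Rmult_lt_0_compat; lra. }
  assert (Hmain : lsum l Aj <= (tau + er) * lsum l Bj).
  { eapply Rle_trans. apply SA. eapply Rle_trans; [|apply Rmult_le_compat_l; [lra|apply SB]].
    assert ((tau + er) * (INR L * (1 - del)) = INR L * tau + INR L * er - INR L * (del * (tau + er))) by ring.
    assert (del * (tau + er) <= del * (tT + er)) by (apply Rmult_le_compat_l; lra).
    assert (INR L * (del * (tau + er)) <= INR L * (er / 2)).
    { apply Rmult_le_compat_l; lra. }
    lra. }
  destruct (pigeon l Aj Bj (tau + er)) as [j [_ [HBj HAj]]]; auto.
  - intros; apply lsum_nonneg; intros; apply Fp_nonneg.
  - intros; apply lsum_nonneg; intros; apply Fp_nonneg.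
  - lra.
  - set (s := pw (Bj j) (/ r)). assert (Hs : 0 < s) by (apply pw_pos_lt; auto).
    exists j, (fun n => Cmult (RtoC (/ s)) (yj x j L n)), (/ s * pw (Aj j) (/ r)).
    split; [|split; [|split]].
    + intros n Hn. rewrite (supp_yj x j L n Hn). unfold Cmult, RtoC; simpl. f_equal; ring.
    + rewrite (lp_scal_fin r _ j L) by (try lra; try apply Rinv_0_lt_compat; auto; apply supp_yj).
      fold (Bj j). fold s. f_equal. field. lra.
    + rewrite (lp_ext _ _ (fun n => Cmult (RtoC (/ s)) (Bop lambda E V (yj x j L) n))) by (intros; apply Bop_scal).
      rewrite (lp_scal_fin r _ (j - 1) (L + 2)) by (try lra; try apply Rinv_0_lt_compat; auto; apply supp_Bop, supp_yj).
      reflexivity.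
    + assert (pw (Aj j) (/ r) <= pw ((tau + er) * Bj j) (/ r)).
      { apply pw_mono. left; apply Rinv_0_lt_compat; lra. split; auto. apply lsum_nonneg; intros; apply Fp_nonneg. }
      rewrite pw_mult in H by lra. fold s in H.
      assert (tau + er <= pw (t + eps) r) by (apply pw_superadd; lra).
      assert (pw (tau + er) (/ r) <= t + eps).
      { rewrite <- (pw_inv r (t + eps)) by lra. apply pw_mono. left; apply Rinv_0_lt_compat; lra. lra. }
      apply Rmult_le_reg_l with s; auto. rewrite <- Rmult_assoc, Rinv_r, Rmult_1_l by lra.
      eapply Rle_trans. apply H. rewrite Rmult_comm. apply Rmult_le_compat_l; lra.
Qed.

Lemma Rmax0_lip u v : Rabs (Rmax 0 u - Rmax 0 v) <= Rabs (u - v).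
Proof.
  unfold Rmax. destruct (Rle_dec 0 u), (Rle_dec 0 v); apply Rabs_le; split;
  try (apply Rabs_le_inv; apply Rle_refl); pose proof (Rle_abs (u - v)); pose proof (Rle_abs (-(u - v)));
  rewrite ?Rabs_Ropp in *; lra.
Qed.

Definition tent (n0 : Z) (Lr : R) (n : Z) : R := Rmax 0 (1 - Rabs (IZR (n - n0)) / Lr).

Lemma tent_lip n0 Lr n m : 0 < Lr -> (m = n + 1 \/ m = n - 1)%Z -> Rabs (tent n0 Lr m - tent n0 Lr n) <= / Lr.
Proof.
  intros HL Hm. unfold tent. eapply Rle_trans. apply Rmax0_lip.
  replace (1 - Rabs (IZR (m - n0)) / Lr - (1 - Rabs (IZR (n - n0)) / Lr))
    with ((Rabs (IZR (n - n0)) - Rabs (IZR (m - n0))) / Lr) by (field; lra).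
  unfold Rdiv. rewrite Rabs_mult, (Rabs_pos_eq (/ Lr)) by (left; apply Rinv_0_lt_compat; auto).
  rewrite <- (Rmult_1_l (/ Lr)) at 2. apply Rmult_le_compat_r. left; apply Rinv_0_lt_compat; auto.
  eapply Rle_trans. apply Rabs_triang_inv2.
  rewrite <- minus_IZR. replace (n - n0 - (m - n0))%Z with (n - m)%Z by lia.
  destruct Hm as [->| ->]. replace (n - (n+1))%Z with (-1)%Z by lia. apply Rabs_le; lra.
  replace (n - (n-1))%Z with 1%Z by lia. apply Rabs_le; lra.
Qed.

Lemma tent_bounds n0 Lr n : 0 < Lr -> 0 <= tent n0 Lr n <= 1.
Proof.
  intros HL. unfold tent. split. apply Rmax_l. apply Rmax_lub. lra.
  assert (0 <= Rabs (IZR (n - n0)) / Lr) by (apply Rdiv_le_0_compat; auto; apply Rabs_pos). lra.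
Qed.

Lemma tent_center n0 Lr : tent n0 Lr n0 = 1.
Proof. unfold tent. rewrite Z.sub_diag, Rabs_R0. unfold Rdiv. rewrite Rmult_0_l, Rminus_0_r. apply Rmax_right; lra. Qed.

Lemma tent_out n0 (L0 : nat) n : (0 < L0)%nat -> ~ (n0 - Z.of_nat L0 <= n < n0 - Z.of_nat L0 + Z.of_nat (2 * L0))%Z ->
  tent n0 (INR L0) n = 0.
Proof.
  intros HL Hn. unfold tent. apply Rmax_left.
  assert (INR L0 <= Rabs (IZR (n - n0))).
  { rewrite INR_IZR_INZ. destruct (Z_lt_le_dec n n0).
    - rewrite Rabs_left. rewrite <- opp_IZR. apply IZR_le. lia. apply IZR_lt. lia.
    - rewrite Rabs_pos_eq. apply IZR_le. lia. apply IZR_le. lia. }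
  assert (0 < INR L0) by (apply lt_0_INR; auto).
  assert (1 <= Rabs (IZR (n - n0)) / INR L0).
  { apply Rmult_le_reg_r with (INR L0); auto. unfold Rdiv. rewrite Rmult_assoc, Rinv_l; lra. }
  lra.
Qed.

Lemma sup_le_bound x s M : lp_norm p_infty x = Finite s -> (forall n, Cmod (x n) <= M) -> s <= M.
Proof.
  intros H HM. destruct (lp_inf_char x s H) as [_ H2]. apply Rnot_lt_le. intros Hlt.
  destruct (H2 (s - M)) as [n Hn]. lra. specialize (HM n). lra.
Qed.

Lemma loc_inf lambda E eps T : 0 < eps -> 0 <= T ->
  exists L : nat, forall V x t, lp_norm p_infty x = Finite 1 ->
    lp_norm p_infty (Bop lambda E V x) = Finite t -> t <= T ->
    exists c y t', supp y c L /\ lp_norm p_infty y = Finite 1 /\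
      lp_norm p_infty (Bop lambda E V y) = Finite t' /\ t' <= t + eps.
Proof.
  intros Heps HT. destruct (nat_gt (4 / eps)) as [L1 HL1].
  set (L0 := S L1). exists (2 * L0)%nat.
  assert (HL0 : 4 / eps < INR L0) by (unfold L0; rewrite S_INR; lra).
  assert (HLr : 0 < INR L0) by (apply lt_0_INR; unfold L0; lia).
  assert (H2L : 2 / INR L0 <= eps / 2).
  { apply Rmult_le_reg_r with (INR L0); auto. unfold Rdiv. rewrite Rmult_assoc, Rinv_l by lra.
    assert (4 = 4 / eps * eps) by (field; lra). assert (4 / eps * eps <= INR L0 * eps) by (apply Rmult_le_compat_r; lra).
    lra. }
  intros V x t Hx HBx Ht.
  destruct (lp_inf_char x 1 Hx) as [Hx1 Hx2].
  destruct (lp_inf_char _ t HBx) as [HB1 _].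
  set (del := eps / (2 * (T + eps))).
  assert (Hdel : del * (T + eps) = eps / 2) by (unfold del; field; lra).
  assert (Hdel0 : 0 < del) by (unfold del; apply Rdiv_lt_0_compat; lra).
  destruct (Hx2 del Hdel0) as [n0 Hn0].
  set (phi := tent n0 (INR L0)).
  set (y := fun n => Cmult (RtoC (phi n)) (x n)).
  assert (Hsy : supp y (n0 - Z.of_nat L0) (2 * L0)).
  { intros n Hn. unfold y, phi. rewrite tent_out by (unfold L0; lia || auto). unfold Cmult, RtoC; simpl. f_equal; ring. }
  destruct (lp_inf_bound y 1) as [s Hs].
  { intros n. unfold y. rewrite Cmod_mult, Cmod_R. pose proof (tent_bounds n0 (INR L0) n HLr).
    rewrite Rabs_pos_eq by (unfold phi; lra). specialize (Hx1 n). fold phi in H.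
    pose proof (Cmod_ge_0 (x n)). nra. }
  assert (Hs1 : 1 - del < s).
  { destruct (lp_inf_char y s Hs) as [Hy _]. specialize (Hy n0). unfold y in Hy.
    rewrite Cmod_mult, Cmod_R in Hy. unfold phi in Hy. rewrite tent_center, Rabs_R1, Rmult_1_l in Hy. lra. }
  assert (HBy : forall n, Cmod (Bop lambda E V y n) <= t + 2 / INR L0).
  { intros n. unfold y. eapply Rle_trans. apply Bop_cut_bound.
    pose proof (tent_bounds n0 (INR L0) n HLr). fold phi in H.
    pose proof (tent_lip n0 (INR L0) n (n + 1)%Z HLr (or_introl eq_refl)).
    pose proof (tent_lip n0 (INR L0) n (n - 1)%Z HLr (or_intror eq_refl)). fold phi in H0, H1.
    specialize (HB1 n). pose proof (Cmod_ge_0 (Bop lambda E V x n)).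
    pose proof (Hx1 (n+1)%Z). pose proof (Hx1 (n-1)%Z). pose proof (Cmod_ge_0 (x (n+1)%Z)). pose proof (Cmod_ge_0 (x (n-1)%Z)).
    rewrite Rabs_pos_eq by lra.
    assert (phi n * Cmod (Bop lambda E V x n) <= t) by nra.
    assert (Rabs (phi (n + 1)%Z - phi n) * Cmod (x (n + 1)%Z) <= / INR L0).
    { rewrite <- (Rmult_1_r (/ INR L0)). apply Rmult_le_compat; auto; apply Rabs_pos. }
    assert (Rabs (phi (n - 1)%Z - phi n) * Cmod (x (n - 1)%Z) <= / INR L0).
    { rewrite <- (Rmult_1_r (/ INR L0)). apply Rmult_le_compat; auto; apply Rabs_pos. }
    unfold Rdiv. lra. }
  destruct (lp_inf_bound _ _ HBy) as [s' Hs'].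
  pose proof (sup_le_bound _ _ _ Hs' HBy) as Hs'b.
  assert (Hdel1 : del <= 1 / 2).
  { unfold del. apply Rmult_le_reg_r with (2 * (T + eps)). lra.
    unfold Rdiv. rewrite Rmult_assoc, Rinv_l by lra. lra. }
  assert (Hspos : 0 < s) by lra.
  exists (n0 - Z.of_nat L0)%Z, (fun n => Cmult (RtoC (/ s)) (y n)), (/ s * s').
  split; [|split; [|split]].
  - intros n Hn. rewrite (Hsy n Hn). unfold Cmult, RtoC; simpl. f_equal; ring.
  - rewrite (lp_scal_inf y (/ s) s) by (auto; apply Rinv_0_lt_compat; auto). f_equal. field. lra.
  - rewrite (lp_ext _ _ (fun n => Cmult (RtoC (/ s)) (Bop lambda E V y n))) by (intros; apply Bop_scal).
    apply lp_scal_inf; auto. apply Rinv_0_lt_compat; auto.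
  - apply Rmult_le_reg_l with s; auto. rewrite <- Rmult_assoc, Rinv_r, Rmult_1_l by lra.
    assert ((t + eps) * (1 - del) <= (t + eps) * s).
    { apply Rmult_le_compat_l. pose proof (lp_norm_nonneg _ _ _ HBx). lra. lra. }
    assert (del * (t + eps) <= del * (T + eps)) by (apply Rmult_le_compat_l; lra).
    nra.
Qed.

Lemma loc p lambda E eps T : Rbar_le (Finite 1) p -> 0 < eps -> 0 <= T ->
  exists L : nat, forall V x t, lp_norm p x = Finite 1 ->
    lp_norm p (Bop lambda E V x) = Finite t -> t <= T ->
    exists c y t', supp y c L /\ lp_norm p y = Finite 1 /\
      lp_norm p (Bop lambda E V y) = Finite t' /\ t' <= t + eps.
Proof.
  intros Hp He HT. destruct p as [r| |]; simpl in Hp; try contradiction.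
  - apply loc_fin; auto.
  - apply loc_inf; auto.
Qed.

Lemma frac_id w z : 0 <= w < 1 -> frac_part (w + IZR z) = w.
Proof.
  intros H. symmetry. apply (proj2 (Int_part_frac_part_spec (w + IZR z) z w H ltac:(ring))).
Qed.

Lemma frac_bounds r : 0 <= frac_part r < 1.
Proof. pose proof (base_fp r). lra. Qed.

Lemma frac_decomp r : r = frac_part r + IZR (Int_part r).
Proof. unfold frac_part. ring. Qed.

Lemma sp1 b th n : 1 - b <= frac_part (IZR n * b + th) -> sturm_pot b th n = 1.
Proof.
  intros H. unfold sturm_pot. destruct (Rle_dec (1 - b) _); [|contradiction].
  destruct (Rlt_dec _ 1); auto. exfalso. pose proof (frac_bounds (IZR n * b + th)). lra.
Qed.

Lemma sp0 b th n : frac_part (IZR n * b + th) < 1 - b -> sturm_pot b th n = 0.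
Proof. intros H. unfold sturm_pot. destruct (Rle_dec (1 - b) _); auto. lra. Qed.

Lemma IZR_lt_le1 a b : IZR a < IZR b -> IZR a <= IZR b - 1.
Proof. intros H. apply lt_IZR in H. rewrite <- minus_IZR. apply IZR_le. lia. Qed.

Lemma dens eta lo hi C : eta <> 0 -> 0 <= lo -> hi <= 1 -> Rabs eta < hi - lo ->
  exists s : Z, lo < frac_part (C + IZR s * eta) < hi.
Proof.
  intros He Hlo Hhi Hab.
  assert (key : forall e, 0 < e -> e < hi - lo -> exists s : Z, lo < C + IZR s * e <= lo + e).
  { intros e He0 He1. set (u := (lo - C) / e). exists (Int_part u + 1)%Z.
    destruct (base_Int_part u) as [B1 B2]. rewrite plus_IZR.
    assert (u * e = lo - C) by (unfold u; field; lra).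
    assert (IZR (Int_part u) * e <= u * e) by (apply Rmult_le_compat_r; lra).
    assert ((u - 1) * e < IZR (Int_part u) * e) by (apply Rmult_lt_compat_r; lra).
    split; nra. }
  destruct (Rlt_or_le 0 eta) as [Hp|Hn].
  - rewrite Rabs_pos_eq in Hab by lra. destruct (key eta Hp Hab) as [s Hs]. exists s.
    rewrite <- (Rplus_0_r (C + IZR s * eta)). change 0 with (IZR 0). rewrite frac_id by lra. lra.
  - rewrite Rabs_left1 in Hab by lra. destruct (key (- eta)) as [s Hs]. lra. lra. exists (- s)%Z.
    rewrite opp_IZR. replace (C + - IZR s * eta) with (C + IZR s * - eta) by ring.
    rewrite <- (Rplus_0_r (C + IZR s * - eta)). change 0 with (IZR 0). rewrite frac_id by lra. lra.
Qed.

Section CF.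
Variable alpha : R.

Definition tt (n : nat) := Nat.iter n gauss alpha.
Definition dig (n : nat) := Int_part (/ tt n).

Fixpoint zpq (n : nat) : (Z * Z) * (Z * Z) :=
  match n with
  | O => ((1, 0), (0, 1))%Z
  | S m => let '((a1, b1), (a2, b2)) := zpq m in
           ((a2, b2), (dig m * a2 + a1, dig m * b2 + b1))%Z
  end.

Definition pp n := fst (snd (zpq n)).
Definition qq n := snd (snd (zpq n)).
Definition pp' n := fst (fst (zpq n)).
Definition qq' n := snd (fst (zpq n)).

Lemma zpq_S n : pp (S n) = (dig n * pp n + pp' n)%Z /\ qq (S n) = (dig n * qq n + qq' n)%Z /\
  pp' (S n) = pp n /\ qq' (S n) = qq n.
Proof. unfold pp, qq, pp', qq'. simpl. destruct (zpq n) as [[a1 b1] [a2 b2]]. simpl. auto. Qed.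

Lemma cf_pq_eq n : cf_pq alpha n = ((IZR (pp' n), IZR (qq' n)), (IZR (pp n), IZR (qq n))).
Proof.
  induction n. reflexivity.
  simpl. rewrite IHn. destruct (zpq_S n) as [E1 [E2 [E3 E4]]]. rewrite E1, E2, E3, E4.
  unfold cf_digit. fold (tt n). fold (dig n). rewrite !plus_IZR, !mult_IZR. reflexivity.
Qed.

Lemma cf_approx_eq n : cf_approx alpha n = IZR (pp n) / IZR (qq n).
Proof. unfold cf_approx. rewrite cf_pq_eq. reflexivity. Qed.

Lemma tt_S n : tt (S n) = frac_part (/ tt n).
Proof. reflexivity. Qed.

Hypothesis Hirr : irrational alpha.
Hypothesis Ha : 0 <= alpha <= 1.

Definition Inv n :=
  0 < tt n < 1 /\ (1 <= qq n)%Z /\ (0 <= qq' n)%Z /\ (Z.of_nat n <= qq n)%Z /\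
  ((pp n * qq' n - pp' n * qq n = 1) \/ (pp n * qq' n - pp' n * qq n = -1))%Z /\
  alpha = (IZR (pp n) + IZR (pp' n) * tt n) / (IZR (qq n) + IZR (qq' n) * tt n) /\
  ((1 <= n)%nat -> (1 <= qq' n)%Z).

Lemma inv_all n : Inv n.
Proof.
  induction n.
  - unfold Inv, tt, pp, qq, pp', qq'. simpl. split; [|split; [lia|split; [lia|split; [lia|split; [lia|split]]]]].
    + split.
      * destruct (Req_dec alpha 0) as [E|E]; [|lra]. exfalso. apply Hirr. exists 0%Z, 1%Z. split. lia.
        rewrite E. field.
      * destruct (Req_dec alpha 1) as [E|E]; [|lra]. exfalso. apply Hirr. exists 1%Z, 1%Z. split. lia.
        rewrite E. field.
    + field.
    + intros; lia.
  - destruct IHn as [Ht [Hq [Hq' [Hqn [Hdet [Hid Hq1]]]]]].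
    destruct (zpq_S n) as [E1 [E2 [E3 E4]]].
    set (t := tt n) in *. set (u := / t). set (a := dig n).
    assert (Hu : 1 < u). { unfold u. rewrite <- Rinv_1. apply Rinv_lt_contravar; lra. }
    destruct (base_Int_part u) as [B1 B2]. assert (Ea : Int_part u = a) by reflexivity. rewrite Ea in B1, B2.
    assert (Ha1 : (1 <= a)%Z). { assert (0 < IZR a) by lra. apply lt_IZR in H. lia. }
    assert (Ht1 : tt (S n) = u - IZR a) by (rewrite tt_S; reflexivity).
    assert (HqS : (1 <= qq (S n))%Z) by (rewrite E2; nia).
    assert (Hnz : tt (S n) <> 0).
    { intros H0. apply Hirr. exists (pp (S n)), (qq (S n)). split. lia.
      rewrite Hid, E1, E2, plus_IZR, plus_IZR, !mult_IZR.
      assert (u = IZR a) by lra. assert (t = / IZR a) by (unfold u in H; rewrite <- H; field; lra).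
      assert (1 <= IZR a) by (apply IZR_le; lia). assert (0 <= IZR (qq' n)) by (apply IZR_le; lia).
      assert (1 <= IZR (qq n)) by (apply IZR_le; lia).
      rewrite H1. change (dig n) with a.
      assert (0 < IZR (qq n) + IZR (qq' n) * / IZR a). { assert (0 < / IZR a) by (apply Rinv_0_lt_compat; lra). nra. }
      field. repeat split; try lra. nra. }
    assert (Hf : 0 <= tt (S n) < 1) by (rewrite tt_S; apply frac_bounds).
    unfold Inv. rewrite E1, E2, E3, E4. split; [|split; [lia|split; [lia|split; [|split; [|split]]]]].
    + split; [|lra]. destruct (proj1 Hf) as [H|H]; auto. exfalso; apply Hnz; auto.
    + rewrite Nat2Z.inj_succ. destruct n. simpl. nia. specialize (Hq1 ltac:(lia)). nia.
    + destruct Hdet; [right|left]; lia.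
    + rewrite Ht1. rewrite Hid. rewrite !plus_IZR, !mult_IZR.
      assert (0 <= IZR (qq' n)) by (apply IZR_le; lia). assert (1 <= IZR (qq n)) by (apply IZR_le; lia).
      unfold u. change (dig n) with a.
      assert (0 < / t) by (apply Rinv_0_lt_compat; lra).
      assert (D1 : IZR (qq n) + IZR (qq' n) * t <> 0) by nra.
      assert (D2 : IZR a * IZR (qq n) + IZR (qq' n) + IZR (qq n) * (/ t - IZR a) <> 0) by nra.
      field. split; [lra|]. replace ((IZR a * IZR (qq n) + IZR (qq' n)) * t + IZR (qq n) * (1 - IZR a * t)) with (IZR (qq n) + IZR (qq' n) * t) by ring. auto.
    + intros _. lia.
Qed.

Lemma err n : 0 < Rabs (IZR (qq n) * alpha - IZR (pp n)) < / IZR (qq (S n)).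
Proof.
  destruct (inv_all n) as [Ht [Hq [Hq' [Hqn [Hdet [Hid Hq1]]]]]].
  destruct (inv_all (S n)) as [HtS _].
  destruct (zpq_S n) as [E1 [E2 [E3 E4]]].
  set (t := tt n) in *. set (a := dig n) in *.
  assert (Hts : tt (S n) = / t - IZR a) by reflexivity.
  assert (Hat : IZR a * t < 1).
  { assert (IZR a < / t) by lra. apply Rmult_lt_reg_r with (/ t). apply Rinv_0_lt_compat; lra.
    rewrite Rmult_assoc, Rinv_r, Rmult_1_l, Rmult_1_r by lra. auto. }
  assert (0 <= IZR (qq' n)) by (apply IZR_le; lia). assert (1 <= IZR (qq n)) by (apply IZR_le; lia).
  assert (HD : 0 < IZR (qq n) + IZR (qq' n) * t) by nra.
  assert (Hx : IZR (qq n) * alpha - IZR (pp n) = t * IZR (qq n * pp' n - pp n * qq' n) / (IZR (qq n) + IZR (qq' n) * t)).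
  { rewrite Hid, minus_IZR, !mult_IZR. field. lra. }
  assert (Habs : Rabs (IZR (qq n) * alpha - IZR (pp n)) = t / (IZR (qq n) + IZR (qq' n) * t)).
  { rewrite Hx. destruct Hdet as [Hd|Hd].
    - replace (qq n * pp' n - pp n * qq' n)%Z with (-1)%Z by lia.
      assert (Hm1 : Rabs (IZR (-1)) = 1) by (rewrite Rabs_left; lra).
      unfold Rdiv. rewrite Rabs_mult, Rabs_mult, Hm1, Rmult_1_r.
      rewrite Rabs_pos_eq by lra. rewrite Rabs_pos_eq; auto. left; apply Rinv_0_lt_compat; auto.
    - replace (qq n * pp' n - pp n * qq' n)%Z with 1%Z by lia.
      unfold Rdiv. rewrite Rabs_mult, Rabs_mult, Rabs_R1, Rmult_1_r.
      rewrite Rabs_pos_eq by lra. rewrite Rabs_pos_eq; auto. left; apply Rinv_0_lt_compat; auto. }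
  rewrite Habs. split. apply Rdiv_lt_0_compat; lra.
  rewrite E2, plus_IZR, mult_IZR. fold a.
  assert (0 < IZR a * IZR (qq n) + IZR (qq' n)).
  { assert (1 <= IZR a). { assert (0 < IZR a) by (pose proof (Rinv_0_lt_compat t ltac:(lra)); 
       assert (1 < / t) by (rewrite <- Rinv_1; apply Rinv_lt_contravar; lra); lra). 
       apply lt_IZR in H1. apply IZR_le. lia. } nra. }
  apply Rmult_lt_reg_r with ((IZR (qq n) + IZR (qq' n) * t) * (IZR a * IZR (qq n) + IZR (qq' n))).
  apply Rmult_lt_0_compat; auto.
  field_simplify; try lra. nra.
Qed.

Lemma qq_ge n : 1 <= IZR (qq n) /\ INR n <= IZR (qq n).
Proof.
  destruct (inv_all n) as [_ [Hq [_ [Hqn _]]]]. split. apply IZR_le; lia.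
  rewrite INR_IZR_INZ. apply IZR_le; lia.
Qed.

Lemma approx_err m : Rabs (alpha - cf_approx alpha m) * IZR (qq m) < / INR (S m).
Proof.
  rewrite cf_approx_eq. destruct (qq_ge m) as [Hq _]. destruct (qq_ge (S m)) as [HqS HqS'].
  destruct (err m) as [_ He].
  replace (Rabs (alpha - IZR (pp m) / IZR (qq m)) * IZR (qq m)) with (Rabs (IZR (qq m) * alpha - IZR (pp m))).
  - eapply Rlt_le_trans. apply He. apply Rinv_le_contravar; auto. rewrite S_INR. pose proof (pos_INR m). lra.
  - rewrite <- (Rabs_pos_eq (IZR (qq m)) ltac:(lra)) at 3. rewrite <- Rabs_mult. f_equal. field. lra.
Qed.

Lemma det_sign m : exists sg : Z, (sg = 1 \/ sg = -1)%Z /\ (pp m * qq' m - pp' m * qq m = sg)%Z.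
Proof. destruct (inv_all m) as [_ [_ [_ [_ [Hd _]]]]]. destruct Hd; eauto. Qed.

End CF.

Section Pat.
Variables (alpha theta : R).
Hypothesis Hirr : irrational alpha.
Hypothesis Ha : 0 <= alpha <= 1.

Lemma grid_le (y Q : R) (G H : Z) : 0 < Q -> y * Q = IZR G -> IZR G < IZR H -> y <= (IZR H - 1) / Q.
Proof.
  intros HQ Hy Hlt. apply IZR_lt_le1 in Hlt. rewrite <- Hy in Hlt.
  apply Rmult_le_reg_r with Q; auto. unfold Rdiv. rewrite Rmult_assoc, Rinv_l, Rmult_1_r by lra. auto.
Qed.

Lemma pat1 (K : nat) : exists M : nat, forall m, (M <= m)%nat -> forall c : Z, exists k : Z,
  forall i : nat, (i < K)%nat ->
    sturm_pot alpha theta (k + Z.of_nat i) = sturm_pot (cf_approx alpha m) 0 (c + Z.of_nat i).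
Proof.
  exists (2 * K)%nat. intros m Hm c.
  set (Q := IZR (qq alpha m)). set (P := IZR (pp alpha m)). set (am := cf_approx alpha m).
  assert (Ham : am = P / Q) by apply cf_approx_eq.
  destruct (qq_ge alpha Hirr Ha m) as [HQ1 _]. fold Q in HQ1.
  set (d := alpha - am). set (ad := Rabs d). assert (Had : 0 <= ad) by apply Rabs_pos.
  pose proof (approx_err alpha Hirr Ha m) as Herr. fold am d ad Q in Herr.
  set (kK := INR K). assert (HkK : 0 <= kK) by apply pos_INR.
  assert (Hm' : 2 * kK + 1 <= INR (S m)).
  { unfold kK. rewrite S_INR. assert (INR (2 * K) <= INR m) by (apply le_INR; auto).
    rewrite mult_INR in H. simpl in H. lra. }
  assert (HKad : 2 * kK * ad < / Q).
  { assert (ad * Q * (2 * kK) <= / INR (S m) * (2 * kK)) by (apply Rmult_le_compat_r; lra).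
    assert (/ INR (S m) * (2 * kK) < 1).
    { apply Rmult_lt_reg_l with (INR (S m)). lra. rewrite <- Rmult_assoc, Rinv_r by lra. lra. }
    apply Rmult_lt_reg_r with Q. lra. rewrite Rinv_l by lra. nra. }
  set (lo := kK * ad). set (hi := / Q - kK * ad).
  assert (HQinv : / Q <= 1). { rewrite <- Rinv_1. apply Rinv_le_contravar; lra. }
  assert (HQinv0 : 0 < / Q) by (apply Rinv_0_lt_compat; lra).
  destruct (nat_gt (/ (hi - lo))) as [N HN].
  destruct (err alpha Hirr Ha N) as [He1 He2].
  destruct (qq_ge alpha Hirr Ha (S N)) as [_ HqS].
  set (eta := IZR (qq alpha N) * alpha - IZR (pp alpha N)) in *.
  assert (Heta : Rabs eta < hi - lo).
  { eapply Rlt_trans. apply He2. assert (0 < hi - lo) by (unfold hi, lo; lra).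
    rewrite <- (Rinv_inv (hi - lo)). apply Rinv_lt_contravar.
    assert (0 < / (hi - lo)) by (apply Rinv_0_lt_compat; auto). rewrite S_INR in HqS.
    apply Rmult_lt_0_compat; lra. rewrite S_INR in HqS. lra. }
  assert (Hetanz : eta <> 0). { intros E0. rewrite E0, Rabs_R0 in He1. lra. }
  set (C := theta - IZR c * am).
  destruct (dens eta lo hi C Hetanz) as [s Hs]; [unfold lo; nra|unfold hi; nra|auto|].
  exists (s * qq alpha N)%Z. intros i Hi.
  set (ii := IZR (Z.of_nat i)).
  assert (Hii : 0 <= ii /\ ii + 1 <= kK).
  { unfold ii, kK. rewrite <- INR_IZR_INZ. split. apply pos_INR. rewrite <- S_INR. apply le_INR. lia. }
  set (y := frac_part (IZR (c + Z.of_nat i) * am + 0)).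
  set (e0 := frac_part (C + IZR s * eta)) in *.
  set (w := e0 + ii * d).
  assert (Hdle : - ad <= d <= ad) by (unfold ad; split; [pose proof (Rle_abs (- d)); rewrite Rabs_Ropp in H; lra|apply Rle_abs]).
  assert (Hw1 : ad < w).
  { unfold w. assert (ii * d >= - (ii * ad)) by nra. assert (kK * ad >= (ii + 1) * ad) by nra.
    unfold lo in Hs. lra. }
  assert (Hw2 : w < / Q - ad).
  { unfold w. assert (ii * d <= ii * ad) by nra. assert (kK * ad >= (ii + 1) * ad) by nra.
    unfold hi in Hs. lra. }
  assert (Hkey : IZR (s * qq alpha N + Z.of_nat i) * alpha + theta =
                 (y + w) + IZR (Int_part (IZR (c + Z.of_nat i) * am + 0) + Int_part (C + IZR s * eta) + s * pp alpha N)).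
  { unfold w, y, e0, frac_part, d, C, eta, ii. rewrite !plus_IZR, !mult_IZR. ring. }
  assert (Hy := frac_bounds (IZR (c + Z.of_nat i) * am + 0)). fold y in Hy.
  assert (Hgrid : y * Q = IZR ((c + Z.of_nat i) * pp alpha m - Int_part (IZR (c + Z.of_nat i) * am + 0) * qq alpha m)).
  { unfold y, frac_part. rewrite minus_IZR, !mult_IZR. fold P Q. rewrite Ham. field. lra. }
  assert (Hy1 : y <= 1 - / Q).
  { replace (1 - / Q) with ((IZR (qq alpha m) - 1) / Q) by (fold Q; field; lra).
    eapply grid_le; eauto. lra. rewrite <- Hgrid. fold Q. nra. }
  destruct (Rle_lt_dec (1 - am) y) as [HA|HB].
  - rewrite (sp1 am 0 (c + Z.of_nat i)) by auto.
    apply sp1. rewrite Hkey, frac_id by lra. unfold d in Hdle. lra.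
  - rewrite (sp0 am 0 (c + Z.of_nat i)) by auto.
    assert (Hy2 : y <= 1 - am - / Q).
    { replace (1 - am - / Q) with ((IZR (qq alpha m - pp alpha m) - 1) / Q)
        by (rewrite minus_IZR; fold Q P; rewrite Ham; field; lra).
      eapply grid_le; eauto. lra. rewrite <- Hgrid, minus_IZR. fold Q P.
      assert (y * Q < (1 - am) * Q) by (apply Rmult_lt_compat_r; lra).
      rewrite Ham in H. replace ((1 - P / Q) * Q) with (Q - P) in H by (field; lra). auto. }
    apply sp0. rewrite Hkey, frac_id by lra. unfold d in Hdle. lra.
Qed.

Lemma gap (c : Z) (K : nat) : exists del, 0 < del <= 1 /\ forall i : nat, (i < K)%nat ->
  let y := frac_part (IZR (c + Z.of_nat i) * alpha + theta) in
  (1 - alpha <= y -> y + del <= 1) /\ (y < 1 - alpha -> y + del <= 1 - alpha).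
Proof.
  induction K.
  - exists 1. split. lra. intros; lia.
  - destruct IHK as [del [Hd HK]].
    set (y := frac_part (IZR (c + Z.of_nat K) * alpha + theta)).
    assert (Hy := frac_bounds (IZR (c + Z.of_nat K) * alpha + theta)). fold y in Hy.
    set (g := if Rle_dec (1 - alpha) y then 1 - y else 1 - alpha - y).
    assert (Hg : 0 < g) by (unfold g; destruct (Rle_dec (1 - alpha) y); lra).
    exists (Rmin del g). split. split. apply Rmin_glb_lt; lra. pose proof (Rmin_l del g); lra.
    intros i Hi. destruct (Nat.eq_dec i K) as [->|Hne].
    + cbv zeta. fold y. pose proof (Rmin_r del g). unfold g in *. destruct (Rle_dec (1 - alpha) y); split; intros; lra.
    + cbv zeta. destruct (HK i ltac:(lia)) as [H1 H2]. pose proof (Rmin_l del g). split; intros; [apply H1 in H0|apply H2 in H0]; lra.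
Qed.

Lemma pat2 (K : nat) (c : Z) : exists M : nat, forall m, (M <= m)%nat -> exists k : Z,
  forall i : nat, (i < K)%nat ->
    sturm_pot (cf_approx alpha m) 0 (k + Z.of_nat i) = sturm_pot alpha theta (c + Z.of_nat i).
Proof.
  destruct (gap c K) as [del [Hdel Hgap]].
  set (kK := INR K). assert (HkK : 0 <= kK) by apply pos_INR.
  destruct (nat_gt ((4 * kK + 4) / del)) as [N HN].
  exists (S N). intros m Hm.
  set (Q := IZR (qq alpha m)). set (P := IZR (pp alpha m)). set (am := cf_approx alpha m).
  assert (Ham : am = P / Q) by apply cf_approx_eq.
  destruct (qq_ge alpha Hirr Ha m) as [HQ1 HQm]. fold Q in HQ1, HQm.
  set (d := alpha - am). set (ad := Rabs d). assert (Had : 0 <= ad) by apply Rabs_pos.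
  pose proof (approx_err alpha Hirr Ha m) as Herr. fold am d ad Q in Herr.
  set (mm := INR m).
  assert (Hmm : INR N < mm) by (apply lt_INR; lia).
  assert (H4 : 0 < (4 * kK + 4) / del) by (apply Rdiv_lt_0_compat; lra).
  assert (Hmm0 : 0 < mm) by lra.
  assert (Hmd : 4 * kK + 4 < mm * del).
  { assert ((4 * kK + 4) / del * del < mm * del) by (apply Rmult_lt_compat_r; lra).
    replace ((4 * kK + 4) / del * del) with (4 * kK + 4) in H by (field; lra). auto. }
  assert (HQi : / Q <= / mm) by (apply Rinv_le_contravar; unfold mm in *; lra).
  assert (Hadm : ad <= / mm).
  { assert (ad <= ad * Q) by nra. assert (/ INR (S m) <= / mm) by (apply Rinv_le_contravar; auto; rewrite S_INR; unfold mm in *; lra). lra. }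
  assert (Hsmall : / Q + 2 * kK * ad < del / 2).
  { assert (/ Q + 2 * kK * ad <= (2 * kK + 1) * / mm).
    { assert (2 * kK * ad <= 2 * kK * / mm) by (apply Rmult_le_compat_l; lra). lra. }
    assert ((2 * kK + 1) * / mm < del / 2).
    { apply Rmult_lt_reg_r with mm; auto. rewrite Rmult_assoc, Rinv_l by lra. lra. }
    lra. }
  assert (HQinv0 : 0 < / Q) by (apply Rinv_0_lt_compat; lra).
  assert (Had2 : ad <= del / 2).
  { assert (/ mm * 2 < del) by (apply Rmult_lt_reg_r with mm; auto; rewrite Rmult_assoc, (Rmult_comm 2), <- Rmult_assoc, Rinv_l by lra; lra). lra. }
  set (lo := kK * ad). set (hi := del / 2 - kK * ad).
  assert (Heta : Rabs (/ Q) < hi - lo) by (rewrite Rabs_pos_eq by lra; unfold hi, lo; lra).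
  set (C := - (IZR c * alpha + theta)).
  destruct (dens (/ Q) lo hi C) as [s Hs]; [lra|unfold lo; nra|unfold hi; nra|auto|].
  destruct (det_sign alpha Hirr Ha m) as [sg [Hsg Hdet]].
  exists (sg * s * qq' alpha m)%Z. intros i Hi.
  set (ii := IZR (Z.of_nat i)).
  assert (Hii : 0 <= ii /\ ii + 1 <= kK).
  { unfold ii, kK. rewrite <- INR_IZR_INZ. split. apply pos_INR. rewrite <- S_INR. apply le_INR. lia. }
  destruct (Hgap i Hi) as [GA GB].
  set (y := frac_part (IZR (c + Z.of_nat i) * alpha + theta)) in *.
  set (e := frac_part (C + IZR s * / Q)) in *.
  set (w := e - ii * d).
  assert (Hdle : - ad <= d <= ad) by (unfold ad; split; [pose proof (Rle_abs (- d)); rewrite Rabs_Ropp in H; lra|apply Rle_abs]).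
  assert (Hw1 : ad < w).
  { unfold w. assert (- (ii * d) >= - (ii * ad)) by nra. assert (kK * ad >= (ii + 1) * ad) by nra.
    unfold lo in Hs. lra. }
  assert (Hw2 : w < del / 2).
  { unfold w. assert (- (ii * d) <= ii * ad) by nra. assert (kK * ad >= (ii + 1) * ad) by nra.
    unfold hi in Hs. lra. }
  assert (Hsg2 : IZR sg * IZR sg = 1) by (destruct Hsg as [-> | ->]; lra).
  assert (Hdet' : P * IZR (qq' alpha m) - IZR (pp' alpha m) * Q = IZR sg).
  { unfold P, Q. rewrite <- !mult_IZR, <- minus_IZR. f_equal. auto. }
  assert (Hj : IZR (sg * s * qq' alpha m) * am = IZR (sg * s * pp' alpha m) + IZR s / Q).
  { assert (IZR (sg * s * qq' alpha m) * am - (IZR (sg * s * pp' alpha m) + IZR s / Q)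
            = IZR s * (IZR sg * (P * IZR (qq' alpha m) - IZR (pp' alpha m) * Q) - 1) / Q).
    { rewrite Ham, !mult_IZR. field. lra. }
    rewrite Hdet', Hsg2 in H. replace (IZR s * (1 - 1) / Q) with 0 in H by (field; lra). lra. }
  assert (Hkey : IZR (sg * s * qq' alpha m + Z.of_nat i) * am + 0 =
                 (y + w) + IZR (sg * s * pp' alpha m + Int_part (C + IZR s * / Q) + Int_part (IZR (c + Z.of_nat i) * alpha + theta))).
  { rewrite plus_IZR, Rmult_plus_distr_r, Hj. unfold w, y, e, frac_part, d, C, ii. rewrite !plus_IZR. field. lra. }
  assert (Hy := frac_bounds (IZR (c + Z.of_nat i) * alpha + theta)). fold y in Hy.
  destruct (Rle_lt_dec (1 - alpha) y) as [HA|HB].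
  - rewrite (sp1 alpha theta (c + Z.of_nat i)) by auto.
    apply sp1. rewrite Hkey, frac_id. unfold d in Hdle. lra. specialize (GA HA). lra.
  - rewrite (sp0 alpha theta (c + Z.of_nat i)) by auto.
    apply sp0. specialize (GB HB). rewrite Hkey, frac_id by lra. unfold d in Hdle. lra.
Qed.
End Pat.

Definition Sset p lambda E V := fun t => exists x : Z -> C,
  lp_norm p x = Finite 1 /\ lp_norm p (Bop lambda E V x) = Finite t.

Definition delta0 : Z -> C := fun n => if Z.eq_dec n 0 then RtoC 1 else RtoC 0.

Lemma delta_in p lambda E V : Rbar_le (Finite 1) p -> exists t, Sset p lambda E V t.
Proof.
  intros Hp. assert (Hs : supp delta0 0 1).
  { intros n Hn. unfold delta0. destruct (Z.eq_dec n 0); auto. lia. }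
  destruct (lp_supp_finite p _ _ _ Hp (supp_Bop lambda E V _ _ _ Hs)) as [t Ht].
  exists t, delta0. split; auto.
  destruct p as [r| |]; simpl in Hp; try contradiction.
  - rewrite (lp_fin r delta0 0 1) by (auto; lra). simpl. rewrite lsum_cons, lsum_nil.
    unfold Fp, delta0. simpl. rewrite Cmod_R, Rabs_R1, pw_one, Rplus_0_r, pw_one. auto.
  - apply lp_inf_intro.
    + intros n. unfold delta0. destruct (Z.eq_dec n 0); rewrite Cmod_R; [rewrite Rabs_R1|rewrite Rabs_R0]; lra.
    + intros d Hd. exists 0%Z. unfold delta0. simpl. rewrite Cmod_R, Rabs_R1. lra.
Qed.

Lemma lower_fin p lambda E V : Rbar_le (Finite 1) p ->
  exists nu, lower_norm p (Bop lambda E V) = Finite nu /\ 0 <= nu /\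
    (forall t, Sset p lambda E V t -> nu <= t) /\
    (forall e, 0 < e -> exists t, Sset p lambda E V t /\ t < nu + e).
Proof.
  intros Hp. unfold lower_norm. fold (Sset p lambda E V).
  pose proof (Glb_Rbar_correct (Sset p lambda E V)) as [Hlb Hglb].
  destruct (delta_in p lambda E V Hp) as [t0 Ht0].
  assert (H0 : Rbar_le 0 (Glb_Rbar (Sset p lambda E V))).
  { apply Hglb. intros t [x [_ Hx]]. simpl. eapply lp_norm_nonneg; eauto. }
  destruct (Glb_Rbar (Sset p lambda E V)) as [nu| |] eqn:Hg.
  - exists nu. split; auto. split; [simpl in H0; auto|split].
    + intros t Ht. apply (Hlb t Ht).
    + intros e He. apply NNPP. intros Hn.
      assert (Rbar_le (nu + e) nu).
      { apply Hglb. intros t Ht. simpl. apply Rnot_lt_le. intros Hlt. apply Hn. eauto. }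
      simpl in H. lra.
  - exfalso. specialize (Hlb t0 Ht0). simpl in Hlb. auto.
  - simpl in H0. contradiction.
Qed.

Lemma transfer p lambda E V W y c L k t' : Rbar_le (Finite 1) p ->
  supp y c L -> lp_norm p y = Finite 1 -> lp_norm p (Bop lambda E V y) = Finite t' ->
  (forall i : nat, (i < L)%nat -> W (k + Z.of_nat i)%Z = V (c + Z.of_nat i)%Z) ->
  Sset p lambda E W t'.
Proof.
  intros Hp Hs Hy HBy Hpat.
  exists (fun n => y (n + (c - k))%Z). split.
  - rewrite (lp_shift p y c L); auto.
  - rewrite (lp_ext _ _ (fun n => Bop lambda E V y (n + (c - k))%Z)).
    + rewrite (lp_shift p _ (c - 1) (L + 2)); auto. apply supp_Bop; auto.
    + intros n. apply Bop_shift. intros m.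
      destruct (Z_lt_le_dec (m + (c - k)) c).
      * left. apply Hs. lia.
      * destruct (Z_lt_le_dec (m + (c - k)) (c + Z.of_nat L)).
        -- right. specialize (Hpat (Z.to_nat (m - k)) ltac:(lia)).
           rewrite Z2Nat.id in Hpat by lia. replace (k + (m - k))%Z with m in Hpat by lia.
           rewrite Hpat. f_equal. lia.
        -- left. apply Hs. lia.
Qed.

Theorem main (p : Rbar) (alpha theta lambda E : R) :
  Rbar_le (Finite 1) p ->
  0 <= alpha <= 1 -> irrational alpha ->
  0 <= theta < 1 ->
  is_lim_seq
    (fun m => real (lower_norm p (H_minus_E lambda (cf_approx alpha m) 0 E)))
    (lower_norm p (H_minus_E lambda alpha theta E)).
Proof.
  intros Hp Ha Hirr Hth.
  rewrite H_minus_E_Bop.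
  set (V := sturm_pot alpha theta).
  set (Vm := fun m => sturm_pot (cf_approx alpha m) 0).
  change (is_lim_seq (fun m => real (lower_norm p (Bop lambda E (Vm m)))) (lower_norm p (Bop lambda E V))).
  destruct (lower_fin p lambda E V Hp) as [nu [Hnu [Hnu0 [Hnulb Hnuap]]]].
  rewrite Hnu. apply is_lim_seq_spec. intros eps.
  assert (He : 0 < eps) by apply cond_pos.
  set (e4 := eps / 4). assert (He4 : 0 < e4) by (unfold e4; lra).
  destruct (loc p lambda E e4 nu Hp He4 Hnu0) as [LA HLA].
  destruct (pat1 alpha theta Hirr Ha LA) as [M1 HM1].
  destruct (Hnuap e4 He4) as [t [[x [Hx HBx]] Ht]].
  pose proof (lp_norm_nonneg _ _ _ HBx) as Ht0.
  destruct (loc p lambda E e4 t Hp He4 Ht0) as [LB HLB].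
  destruct (HLB V x t Hx HBx (Rle_refl t)) as [c [y [t' [Hsy [Hy [HBy Ht']]]]]].
  destruct (pat2 alpha theta Hirr Ha LB c) as [M2 HM2].
  exists (Nat.max M1 M2). intros m Hm.
  destruct (lower_fin p lambda E (Vm m) Hp) as [num [Hnum [Hnum0 [Hnumlb Hnumap]]]].
  rewrite Hnum. simpl.
  assert (UB : num <= nu + 2 * e4).
  { destruct (HM2 m ltac:(lia)) as [k Hk].
    assert (Sset p lambda E (Vm m) t') by (eapply transfer; eauto).
    apply Hnumlb in H. lra. }
  assert (LB' : nu - 2 * e4 <= num).
  { apply Rnot_lt_le. intros Hlt.
    destruct (Hnumap e4 He4) as [s [[z [Hz HBz]] Hs]].
    destruct (HLA (Vm m) z s Hz HBz ltac:(lra)) as [c' [y' [s' [Hsy' [Hy' [HBy' Hs']]]]]].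
    destruct (HM1 m ltac:(lia) c') as [k Hk].
    assert (Sset p lambda E V s') by (eapply transfer; eauto).
    apply Hnulb in H. lra. }
  apply Rabs_lt_between'. unfold e4 in *. lra.
Qed.


Theorem lemma5p10 (p : Rbar) (alpha theta lambda E : R) :
  Rbar_le (Finite 1) p ->
  0 <= alpha <= 1 -> irrational alpha ->
  0 <= theta < 1 ->
  is_lim_seq
    (fun m => real (lower_norm p (H_minus_E lambda (cf_approx alpha m) 0 E)))
    (lower_norm p (H_minus_E lambda alpha theta E)).
Proof.
  exact (main p alpha theta lambda E).
Qed.
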